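(* Let $N\ge1$, $S_1,\dots,S_N\ge1$, and consider an $S_1\times\cdots\times S_N$-setting $N$-partite correlation experiment with joint distributions $P_s$ on $\Lambda_1^{(s_1)}\times\cdots\times\Lambda_N^{(s_N)}$ for $s=(s_1,\dots,s_N)$, admitting an LHV model. Then for any real coefficients $\gamma_s^{(q_s)}$ and any events $D_s^{(q_s)}\subseteq\Lambda_1^{(s_1)}\times\cdots\times\Lambda_N^{(s_N)}$, $q_s=1,\dots,Q_s$, observed under the joint measurement $s$, the tight linear LHV constraint $$\inf_{\lambda_1\in\Lambda_1,\dots,\lambda_N\in\Lambda_N}\sum_{q_s,\,s}\gamma_s^{(q_s)}\chi_{D_s^{(q_s)}}(\lambda_1^{(s_1)},\dots,\lambda_N^{(s_N)})\le\sum_{q_s,\,s}\gamma_s^{(q_s)}P_s(D_s^{(q_s)})\le\sup_{\lambda_1\in\Lambda_1,\dots,\lambda_N\in\Lambda_N}\sum_{q_s,\,s}\gamma_s^{(q_s)}\chi_{D_s^{(q_s)}}(\lambda_1^{(s_1)},\dots,\lambda_N^{(s_N)})$$ holds, where $\lambda_n=(\lambda_n^{(1)},\dots,\lambda_n^{(S_n)})$ and $\Lambda_n=\Lambda_n^{(1)}\times\cdots\times\Lambda_n^{(S_n)}$.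
   Context: Party $n$ performs measurements $s_n\in\{1,\dots,S_n\}$ with outcomes in a measurable space $\Lambda_n^{(s_n)}$. $\chi_D$ is the indicator function of $D$. The sum runs over all joint settings $s$ and all $q_s=1,\dots,Q_s$. The experiment admitting an LHV model is characterized by the existence of a probability measure on $\Lambda_1\times\cdots\times\Lambda_N$ having every $P_s$ as the marginal on coordinates $(\lambda_1^{(s_1)},\dots,\lambda_N^{(s_N)})$. A linear LHV constraint is tight if, within the class of experiments with the given outcome sets admitting an LHV model, its bounds cannot be improved. *)

(* Defs.v *)
From HB Require Import structures.
From mathcomp Require Import all_boot all_order all_algebra.
From mathcomp Require Import all_classical all_reals all_analysis.
Unset Printing Implicit Defensive.
Import Order.TTheory GRing.Theory Num.Theory.
Local Open Scope classical_set_scope.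
Local Open Scope ring_scope.

Definition dprod (I : Type) (d : I -> measure_display)
  (X : forall i, measurableType (d i)) : Type := forall i, X i.
Arguments dprod {I d} X.

Definition dprod_display : measure_display. Proof. exact: default_measure_display. Qed.

Section dprod_measurable.
Variables (I : Type) (d : I -> measure_display) (X : forall i, measurableType (d i)).

HB.instance Definition _ := gen_eqMixin (dprod X).
HB.instance Definition _ := gen_choiceMixin (dprod X).
HB.instance Definition _ := isPointed.Build (dprod X) (fun i => point).

Definition dprod_cylinders : set (set (dprod X)) :=
  [set B | exists i : I, exists2 A : set (X i),
     measurable A & B = (fun x : dprod X => x i) @^-1` A].

Definition dprod_measurable := <<s dprod_cylinders >>.

Let dprod_set0 : dprod_measurable set0.
Proof. exact: sigma_algebra0. Qed.
Let dprod_setC A : dprod_measurable A -> dprod_measurable (~` A).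
Proof. exact: sigma_algebraC. Qed.
Let dprod_bigcup (F : (set (dprod X))^nat) : (forall i, dprod_measurable (F i)) ->
  dprod_measurable (\bigcup_i (F i)).
Proof. exact: sigma_algebra_bigcup. Qed.

HB.instance Definition _ := @isMeasurable.Build dprod_display
  (dprod X) dprod_measurable dprod_set0 dprod_setC dprod_bigcup.
End dprod_measurable.

Section experiment.
Variables (R : realType) (N : nat) (S : 'I_N -> nat)
  (d : forall n : 'I_N, 'I_(S n) -> measure_display)
  (T : forall (n : 'I_N) (k : 'I_(S n)), measurableType (d n k)).

(** joint settings s = (s_1, ..., s_N), with s_n in {1..S_n} (0-based) *)
Definition setting := {dffun forall n : 'I_N, 'I_(S n)}.

Definition outcome (s : setting) := dprod (fun n => T n (s n)).

Definition party_space (n : 'I_N) := dprod (T n).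

Definition hidden_space := dprod party_space.

Definition proj_setting (s : setting) (l : hidden_space) : outcome s :=
  fun n => l n (s n).

(** The experiment (P_s)_s admits an LHV model: there is a probability
    measure on Lambda_1 x ... x Lambda_N whose marginal on the coordinates
    (lambda_1^(s_1), ..., lambda_N^(s_N)) is P_s, for every s. *)
Definition has_LHV_model (P : forall s : setting, probability (outcome s) R) :=
  exists mu : probability hidden_space R,
    forall (s : setting) (A : set (outcome s)), measurable A ->
      mu (proj_setting s @^-1` A) = P s A.

Variables (Q : setting -> nat) (gamma : forall s, 'I_(Q s) -> R)
  (D : forall s, 'I_(Q s) -> set (outcome s)).

Definition lhv_functional (l : hidden_space) : R :=
  \sum_(s : setting) \sum_(q < Q s) gamma s q * \1_(D s q) (proj_setting s l).

Definition experiment_value (P : forall s : setting, probability (outcome s) R) : R :=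
  \sum_(s : setting) \sum_(q < Q s) gamma s q * fine (P s (D s q)).

End experiment.

Arguments setting {N} S.
Arguments outcome {N S d} T s.
Arguments party_space {N S d} T n.
Arguments hidden_space {N S d} T.
Arguments proj_setting {N S d T} s l.
Arguments has_LHV_model {R N S d T} P.
Arguments lhv_functional {R N S d T Q} gamma D l.
Arguments experiment_value {R N S d T Q} gamma D P.

(* Main.v *)
Require Import Defs.
From HB Require Import structures.
From mathcomp Require Import all_boot all_order all_algebra.
From mathcomp Require Import all_classical all_reals all_analysis.
Import Order.TTheory GRing.Theory Num.Theory.
Local Open Scope classical_set_scope.
Local Open Scope ring_scope.
Section S.
Variables (R : realType) (N : nat) (S : 'I_N -> nat)
  (d : forall n : 'I_N, 'I_(S n) -> measure_display)
  (T : forall (n : 'I_N) (k : 'I_(S n)), measurableType (d n k)).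
Variables (Q : setting S -> nat) (gamma : forall s : setting S, 'I_(Q s) -> R)
    (D : forall s : setting S, 'I_(Q s) -> set (outcome T s)).

Lemma proj_meas (s : setting S) : measurable_fun setT (@proj_setting _ _ _ T s).
Proof.
apply: (@measurability _ _ _ _ setT (@proj_setting _ _ _ T s) (@dprod_cylinders _ _ (fun n => T n (s n)))) => //.
move=> _ [B [n [A mA ->]] <-].
apply: sub_sigma_algebra; exists n.
exists ((fun y : party_space T n => y (s n)) @^-1` A).
  by apply: sub_sigma_algebra; exists (s n); exists A.
by rewrite setTI.
Qed.

Definition B := \sum_(s : setting S) \sum_(q < Q s) `|gamma s q|.

Lemma f_bound l : `|lhv_functional gamma D l| <= B.
Proof.
rewrite /lhv_functional /B; apply: (le_trans (ler_norm_sum _ _ _)).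
apply: ler_sum => s _; apply: (le_trans (ler_norm_sum _ _ _)).
apply: ler_sum => q _; rewrite normrM indicE.
case: (_ \in _); rewrite ?normr1 ?normr0 ?mulr1 ?mulr0 //.
Qed.

Let pt : hidden_space T := fun n k => point.

Lemma hsup : has_sup (range (lhv_functional gamma D)).
Proof.
split; first by exists (lhv_functional gamma D pt); exists pt.
exists B => _ [l _ <-]; exact: le_trans (ler_norm _) (f_bound l).
Qed.

Lemma hinf : has_inf (range (lhv_functional gamma D)).
Proof.
split; first by exists (lhv_functional gamma D pt); exists pt.
exists (- B) => _ [l _ <-]; have := f_bound l; by rewrite ler_norml => /andP[].
Qed.
Local Open Scope ereal_scope.
Lemma integral_repr (mu : probability (hidden_space T) R)
  (P : forall s : setting S, probability (outcome T s) R)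
  (HP : forall (s : setting S) (A : set (outcome T s)), measurable A ->
      mu (proj_setting s @^-1` A) = P s A)
  (mD : forall (s : setting S) (q : 'I_(Q s)), measurable (D s q)) :
  mu.-integrable setT (fun x => (lhv_functional gamma D x)%:E) /\
  (experiment_value gamma D P)%:E = \int[mu]_x (lhv_functional gamma D x)%:E.
Proof.
have mA s q : measurable (proj_setting s @^-1` D s q).
  by have := proj_meas s measurableT _ (mD s q); rewrite setTI.
have eqf : (fun x => (lhv_functional gamma D x)%:E) = (fun x =>
   \sum_(s : setting S) \sum_(q < Q s) (gamma s q)%:E * (\1_(proj_setting s @^-1` D s q) x)%:E).
  apply/funext => x; rewrite /lhv_functional -sumEFin; apply: eq_bigr => s _.
  by rewrite -sumEFin; apply: eq_bigr => q _; rewrite EFinM.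
have ii s q : mu.-integrable setT (fun x => (gamma s q)%:E * (\1_(proj_setting s @^-1` D s q) x)%:E).
  exact: (integrableZl measurableT _ (integrable_indic mu (mA s q))).
have iS (r : setting S) : mu.-integrable setT (fun x => \sum_(q < Q r) (gamma r q)%:E * (\1_(proj_setting r @^-1` D r q) x)%:E).
  by apply: (integrable_sum measurableT) => i _; exact: ii.
rewrite eqf; split; first by apply: (integrable_sum measurableT) => i _; exact: iS.
rewrite integral_sum //=; rewrite /experiment_value -sumEFin; apply: eq_bigr => s _.
rewrite integral_sum //=; rewrite -sumEFin; apply: eq_bigr => q _.
rewrite (integralZl measurableT (integrable_indic mu (mA s q))).
rewrite integral_indic // setIT EFinM fineK; last exact: fin_num_measure (mD s q).
by f_equal; symmetry; exact: (HP s (D s q) (mD s q)).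
Qed.
End S.
Lemma dirac_exp R N S d T Q gamma D (l : hidden_space T) :
  exists P' : forall s : setting S, probability (outcome T s) R,
     has_LHV_model P' /\ experiment_value gamma D P' = @lhv_functional R N S d T Q gamma D l.
Proof.
exists (fun s => (\d_(proj_setting s l) : probability (outcome T s) R)).
split.
  exists (\d_l : probability (hidden_space T) R) => s A mA.
  by [].
rewrite /experiment_value /lhv_functional; apply: eq_bigr => s _; apply: eq_bigr => q _.
by [].
Qed.
Local Close Scope ereal_scope.

Theorem corollary4 (R : realType) (N : nat) (S : 'I_N -> nat)
  (d : forall n : 'I_N, 'I_(S n) -> measure_display)
  (T : forall (n : 'I_N) (k : 'I_(S n)), measurableType (d n k)) :
  (1 <= N)%N -> (forall n : 'I_N, (1 <= S n)%N) ->
  forall (P : forall s : setting S, probability (outcome T s) R),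
  has_LHV_model P ->
  forall (Q : setting S -> nat) (gamma : forall s : setting S, 'I_(Q s) -> R)
    (D : forall s : setting S, 'I_(Q s) -> set (outcome T s)),
  (forall (s : setting S) (q : 'I_(Q s)), measurable (D s q)) ->
  (* the linear LHV constraint *)
  (inf (range (lhv_functional gamma D)) <= experiment_value gamma D P
   <= sup (range (lhv_functional gamma D)))
  (* tightness of the upper bound: it cannot be lowered within the class of
     experiments with the same outcome spaces admitting an LHV model *)
  /\ (forall c : R, c < sup (range (lhv_functional gamma D)) ->
        exists P' : forall s : setting S, probability (outcome T s) R,
          has_LHV_model P' /\ c < experiment_value gamma D P')
  (* tightness of the lower bound *)
  /\ (forall c : R, inf (range (lhv_functional gamma D)) < c ->
        exists P' : forall s : setting S, probability (outcome T s) R,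
          has_LHV_model P' /\ experiment_value gamma D P' < c).
Proof.
move=> _ _ P [mu HP] Q gamma D mD.
have hs := @hsup _ _ _ _ _ _ gamma D; have hi := @hinf _ _ _ _ _ _ gamma D.
split; [|split].
- have [intf eq] := @integral_repr _ _ _ _ _ _ gamma D mu P HP mD.
  have c1 (r : R) : (\int[mu]_x (EFin \o cst r) x = r%:E)%E.
    by rewrite (_ : EFin \o cst r = cst r%:E) // integral_cst //; transitivity (r%:E * 1)%E; [f_equal; exact: probability_setT | exact: mule1].
  apply/andP; split; rewrite -lee_fin eq.
  + rewrite -c1; apply: le_integral => //; first exact: finite_measure_integrable_cst.
    move=> x _; rewrite lee_fin /=; apply: (ge_inf hi.2); by exists x.
  + rewrite -c1; apply: le_integral => //; first exact: finite_measure_integrable_cst.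
    move=> x _; rewrite lee_fin /=; apply: (sup_upper_bound hs); by exists x.
- move=> c hc.
  have h0 : 0 < sup (range (lhv_functional gamma D)) - c by rewrite subr_gt0.
  have [_ [l _ <-] he] := sup_adherent h0 hs.
  have [P' [HP' E]] := @dirac_exp _ _ _ _ _ _ gamma D l.
  exists P'; split => //; rewrite E; move: he; by rewrite opprB addrCA subrr addr0.
- move=> c hc.
  have h0 : 0 < c - inf (range (lhv_functional gamma D)) by rewrite subr_gt0.
  have [_ [l _ <-] he] := inf_adherent h0 hi.
  have [P' [HP' E]] := @dirac_exp _ _ _ _ _ _ gamma D l.
  exists P'; split => //; rewrite E; move: he; by rewrite addrCA subrr addr0.
Qed.
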